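(* Fix $a>0$. Let $\mu$ be a probability measure on $\mathbb{R}_+^\infty$ and $(\mathbf{U},\mathbf{V}_a)$ a coupling of $\mu$ and $\pi_a$ such that almost surely $\limsup_{d\to\infty}\frac{\log\log d}{\log d}\sum_{i=1}^d|V_{a,i}-U_i|=0$ and $\limsup_{d\to\infty}\frac{U_d}{dV_{a,d}}<\infty$. Then, almost surely, there exists $i_0\ge2$ such that $s(\mathbf{U})_i\ge(4a)^{-1}\log i$ for all $i\ge i_0$. Moreover $s(\mathbf{U})$, $s(\mathbf{U}\wedge\mathbf{V}_a)$ and $s(\mathbf{V}_a)$ all satisfy the summability condition $\sum_i e^{-\alpha s(\cdot)_i^2}<\infty$ for all $\alpha>0$ almost surely; in particular $\mu\in\mathcal{S}$.
   Context: $\pi_a=\bigotimes_{i\ge1}\operatorname{Exp}(2+ia)$ with $\operatorname{Exp}(\lambda)$ the exponential law of rate $\lambda$. For $\mathbf{v}=(v_1,v_2,\dots)\in\mathbb{R}_+^\infty$, $s(\mathbf{v})$ is the vector with $i$-th coordinate $v_1+\cdots+v_i$; $\wedge$ is the coordinatewise minimum. $\mathcal{S}$ is the set of laws of gap vectors $(y_i-y_{i-1})_{i\ge1}$ of random sequences $0=y_0\le y_1\le\cdots$ with $\sum_ie^{-\alpha y_i^2}<\infty$ for all $\alpha>0$ a.s. (equivalently, laws of $\mathbf{v}$ with $s(\mathbf{v})$ satisfying this summability). *)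

(* Defs.v *)
From HB Require Import structures.
From mathcomp Require Import all_boot all_order all_algebra.
From mathcomp Require Import all_classical all_reals all_analysis.
Set Implicit Arguments. Unset Strict Implicit. Unset Printing Implicit Defensive.
Import Order.TTheory GRing.Theory Num.Theory.
Import numFieldNormedType.Exports.
Local Open Scope classical_set_scope.
Local Open Scope ring_scope.

(* Sequences in R^infty are indexed from 0 : the paper's coordinate v_i
   (i >= 1) is [v (i-1)]. *)

(* s(v)_i = v_1 + ... + v_i, i.e. with our 0-based indexing
   [partial_sum v i = \sum_(j < i) v j]; [partial_sum v 0 = 0 = y_0]. *)
Definition partial_sum {R : realType} (v : nat -> R) (i : nat) : R :=
  \sum_(j < i) v j.

Definition seq_min {R : realType} (u v : nat -> R) : nat -> R :=
  fun i => Num.min (u i) (v i).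

Definition gauss_summable {R : realType} (y : nat -> R) : Prop :=
  forall alpha : R, 0 < alpha ->
    cvgn (series (fun i => expR (- alpha * (y i) ^+ 2))).

(* The random sequence V (on the probability space (T,P)) has law
   pi_a = (x)_{i>=1} Exp(2 + i a): each coordinate is a random variable and,
   for every n and Borel sets B_1..B_n, P(V_1 in B_1, ..., V_n in B_n) =
   prod_i Exp(2 + i a)(B_i)  (independence + exponential marginals). *)
Definition has_law_pi {R : realType} (d : measure_display)
  (T : measurableType d) (P : probability T R) (a : R) (V : T -> nat -> R)
  : Prop :=
  (forall i, measurable_fun setT (fun w => V w i)) /\
  (forall (n : nat) (B : nat -> set R), (forall i, measurable (B i)) ->
     P (\bigcap_(i in `I_n) [set w | B i (V w i)]) =
     (\prod_(i < n) exponential_prob (2 + (i.+1)%:R * a) (B i))%E).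

(* A probability measure mu on R_+^infty belongs to S iff a random vector
   v with law mu satisfies: s(v) fulfills [gauss_summable] almost surely. *)
Definition law_in_S {R : realType} (d : measure_display)
  (T : measurableType d) (P : probability T R) (U : T -> nat -> R) : Prop :=
  (forall w i, 0 <= U w i) /\
  {ae P, forall w, gauss_summable (partial_sum (U w))}.

(* Main.v *)
Require Import Defs.
From HB Require Import structures.
From mathcomp Require Import all_boot all_order all_algebra.
From mathcomp Require Import all_classical all_reals all_analysis.
From mathcomp Require Import ring lra.
Set Implicit Arguments. Unset Strict Implicit. Unset Printing Implicit Defensive.
Import Order.TTheory GRing.Theory Num.Theory.
Import numFieldNormedType.Exports.
Local Open Scope classical_set_scope.
Local Open Scope ring_scope.

Section alg.
Context {R : realType}.

Lemma prod_sum_bool (n : nat) (A B : 'I_n -> R) :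
  \prod_(i < n) (A i + B i) =
  \sum_(f : {ffun 'I_n -> bool}) \prod_(i < n) (if f i then A i else B i).
Proof.
have -> : \prod_(i < n) (A i + B i) =
   \prod_(i < n) \sum_(b : bool) (if b then A i else B i).
  by apply: eq_bigr => i _; rewrite big_bool.
exact: (bigA_distr_bigA (fun (i : 'I_n) (b : bool) => if b then A i else B i)).
Qed.

Lemma factor_le (p x : R) : 0 <= p <= 1 -> 0 <= x ->
  p * expR (- x) + (1 - p) <= expR (- (p * x) + p * x ^+ 2).
Proof.
move=> /andP[p0 p1] x0.
have x1 : 0 < 1 + x by rewrite ltr_pwDl.
have e1 : expR (- x) <= (1 + x)^-1.
  rewrite expRN lef_pV2 ?posrE ?expR_gt0 //; exact: expR_ge1Dx.
apply: (le_trans (y := 1 + - (p * x / (1 + x)))).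
  have h1 : p * expR (- x) <= p * (1 + x)^-1 by apply: ler_wpM2l.
  have h2 : p * x / (1 + x) = p - p * (1 + x)^-1 by field; rewrite gt_eqF.
  rewrite h2; lra.
apply: le_trans (expR_ge1Dx _) _; rewrite ler_expR.
have : p * x / (1 + x) * x <= p * x * x.
  apply: ler_wpM2r => //; rewrite ler_pdivrMr // ler_peMr ?mulr_ge0 //.
  by rewrite lerDl.
have -> : p * x / (1 + x) * x = p * x - p * x / (1 + x).
  by field; rewrite gt_eqF.
rewrite expr2 mulrA; lra.
Qed.


Lemma sum_bad (n : nat) (y : nat -> R) (p r s : R) :
  0 <= p <= 1 -> 0 <= s -> (forall i, 0 <= y i) ->
  \sum_(f : {ffun 'I_n -> bool} | \sum_(i < n | f i) y i < r)
     \prod_(i < n) (if f i then p else 1 - p)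
  <= expR (s * r - p * s * \sum_(i < n) y i + p * s ^+ 2 * \sum_(i < n) y i ^+ 2).
Proof.
move=> /andP[p0 p1] s0 y0.
have T0 (f : {ffun 'I_n -> bool}) : 0 <= \prod_(i < n) (if f i then p else 1 - p).
  by apply: prodr_ge0 => i _; case: (f i); lra.
apply: (le_trans (y := \sum_(f : {ffun 'I_n -> bool})
   expR (s * (r - \sum_(i < n | f i) y i)) * \prod_(i < n) (if f i then p else 1 - p))).
  rewrite [leRHS](bigID (fun f : {ffun 'I_n -> bool} => \sum_(i < n | f i) y i < r)) /=.
  rewrite -[leLHS]addr0; apply: lerD.
    apply: ler_sum => f fb; rewrite ler_peMl //.
    apply: le_trans (expR_ge1Dx _); rewrite lerDl mulr_ge0 //; lra.
  by apply: sumr_ge0 => f _; rewrite mulr_ge0 ?expR_ge0.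
have -> : \sum_(f : {ffun 'I_n -> bool})
   expR (s * (r - \sum_(i < n | f i) y i)) * \prod_(i < n) (if f i then p else 1 - p)
   = expR (s * r) * \prod_(i < n) (p * expR (- (s * y i)) + (1 - p)).
  rewrite prod_sum_bool mulr_sumr; apply: eq_bigr => f _.
  rewrite mulrBr expRD -mulrA; congr (_ * _).
  have -> : expR (- (s * \sum_(i < n | f i) y i)) =
     \prod_(i < n) (if f i then expR (- (s * y i)) else 1).
    rewrite mulr_sumr -sumrN expR_sum big_mkcond /=.
    by apply: eq_bigr => i _; case: (f i).
  rewrite -big_split /=.
  by apply: eq_bigr => i _; case: (f i); rewrite ?mul1r // mulrC.
rewrite -addrA expRD ler_wpM2l ?expR_ge0 //.
have -> : - (p * s * \sum_(i < n) y i) + p * s ^+ 2 * \sum_(i < n) y i ^+ 2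
   = \sum_(i < n) (- (p * (s * y i)) + p * (s * y i) ^+ 2).
  rewrite big_split /= sumrN; congr (- _ + _).
    by rewrite mulr_sumr; apply: eq_bigr => i _; rewrite mulrA.
  rewrite mulr_sumr; apply: eq_bigr => i _. by ring.
rewrite expR_sum; apply: ler_prod => i _; apply/andP; split.
  by rewrite addr_ge0 ?mulr_ge0 ?expR_ge0 //; lra.
by apply: factor_le; rewrite ?p0 ?p1 ?mulr_ge0.
Qed. End alg.

Section ub.
Context {R : realType} (d : measure_display) (T : measurableType d) (P : probability T R).

Lemma union_bound (I : eqType) (s : seq I) (Q : pred I) (F : I -> set T) :
  (forall i, measurable (F i)) ->
  measurable [set w | exists i, i \in s /\ Q i /\ F i w] /\
  (P [set w | exists i, i \in s /\ Q i /\ F i w] <= \sum_(i <- s | Q i) P (F i))%E.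
Proof.
move=> mF; elim: s => [|x s [ms IH]].
  have -> : [set w | exists i, i \in [::] /\ Q i /\ F i w] = set0.
    by apply/seteqP; split => w //= [i []].
  by rewrite big_nil measure0.
have -> : [set w | exists i, i \in x :: s /\ Q i /\ F i w] =
   (if Q x then F x else set0) `|` [set w | exists i, i \in s /\ Q i /\ F i w].
  apply/seteqP; split => w /=.
    move=> [i []]; rewrite inE => /orP[/eqP -> | si] [Qi Fi].
      by left; rewrite Qi.
    by right; exists i.
  case=> [|[i [si [Qi Fi]]]].
    by case: ifPn => // Qx Fx; exists x; rewrite inE eqxx.
  by exists i; rewrite inE si orbT.
have mx : measurable (if Q x then F x else set0) by case: ifPn.
split; first exact: measurableU.
rewrite big_cons; apply: le_trans (measureU2 _ mx ms) _.
case: ifPn => Qx; first by rewrite leeD2l.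
by rewrite measure0 add0e.
Qed.
End ub.

Section expo.
Context {R : realType}.
Definition EP (r : R) (h : 0 < r) :=
  @exponential_distribution_exponential_prob__canonical__probability_measure_Probability R r h.

Lemma EP_neg (r : R) : exponential_prob r `]-oo, 0[ = 0%E.
Proof.
rewrite /exponential_prob integral0_eq // => x /=; rewrite in_itv /= => x0.
by rewrite lt0_exponential_pdf.
Qed.

Lemma EP_le (r y : R) : 0 < r -> 0 < y ->
  exponential_prob r `]-oo, y] = (1 - (expR (- r * y))%:E)%E.
Proof.
move=> r0 y0.
have -> : `]-oo, y]%classic = `]-oo, 0[%classic `|` `[0, y]%classic :> set R.
  apply/seteqP; split => x /=; rewrite !in_itv /=.
    by move=> xy; case: (ltP x 0) => x0; [left|right; rewrite xy].
  by case=> [x0|/andP[_ //]]; rewrite ltW // (lt_trans x0 y0).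
have := @measureU _ _ _ (@EP r r0) `]-oo, 0[%classic `[0, y]%classic.
rewrite /= => ->//.
- by rewrite EP_neg add0e exponential_prob_itv0c.
- apply/seteqP; split => x //=; rewrite !in_itv /= => -[x0 /andP[x0' _]].
  by move: (lt_le_trans x0 x0'); rewrite ltxx.
Qed.

Lemma EP_gt (r y : R) : 0 < r -> 0 < y ->
  exponential_prob r `]y, +oo[ = (expR (- r * y))%:E.
Proof.
move=> r0 y0.
have -> : `]y, +oo[%classic = ~` `]-oo, y]%classic :> set R.
  by rewrite setCitvl.
have := @probability_setC _ _ _ (@EP r r0) `]-oo, y]%classic.
rewrite /= => ->//; rewrite EP_le //.
by rewrite -EFinB opprB addrC subrK.
Qed.
End expo.

Definition lam {R : realType} (a : R) (i : nat) : R := 2 + (i.+1)%:R * a.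

Section ana.
Context {R : realType} (a : R) (a0 : 0 < a).

Lemma lam_gt0 i : 0 < lam a i.
Proof. by rewrite /lam ltr_wpDr // mulr_ge0 // ltW. Qed.

Lemma lam_ge2 i : 2 <= lam a i.
Proof. by rewrite /lam lerDl mulr_ge0 // ltW. Qed.

Lemma lamS i : lam a i.+1 = lam a i + a.
Proof. by rewrite /lam -[i.+2%:R]natr1; ring. Qed.

Lemma lam_ge n : n%:R * a <= lam a n.
Proof.
rewrite /lam -[n.+1%:R]natr1 mulrDl mul1r addrC -addrA lerDl addr_ge0 // ltW //.
Qed.

Lemma Y_lb n : (ln (lam a n) - ln (lam a 0)) / a <= \sum_(i < n) (lam a i)^-1.
Proof.
elim: n => [|n IH]; first by rewrite big_ord0 subrr mul0r.
rewrite big_ord_recr /=.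
have h : ln (lam a n.+1) - ln (lam a n) <= a / lam a n.
  rewrite -ln_div ?posrE ?lam_gt0 // lamS.
  have -> : (lam a n + a) / lam a n = 1 + a / lam a n.
    by field; rewrite gt_eqF // lam_gt0.
  apply: le_ln1Dx; apply: lt_le_trans (_ : 0 <= _); first by rewrite ltrN10.
  by rewrite divr_ge0 // ltW // lam_gt0.
have -> : (ln (lam a n.+1) - ln (lam a 0)) / a =
   (ln (lam a n) - ln (lam a 0)) / a + (ln (lam a n.+1) - ln (lam a n)) / a.
  by field; rewrite gt_eqF.
apply: lerD => //.
rewrite ler_pdivrMr //; apply: le_trans h _.
by rewrite mulrC.
Qed.

Lemma Q_ub n : \sum_(i < n) ((lam a i)^-1) ^+ 2 <=
  (2 + a) / (2 * a) * ((lam a 0)^-1 - (lam a n)^-1).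
Proof.
elim: n => [|n IH]; first by rewrite big_ord0 subrr mulr0.
rewrite big_ord_recr /=.
have -> : (2 + a) / (2 * a) * ((lam a 0)^-1 - (lam a n.+1)^-1) =
   (2 + a) / (2 * a) * ((lam a 0)^-1 - (lam a n)^-1) +
   (2 + a) / (2 * a) * ((lam a n)^-1 - (lam a n.+1)^-1).
  by ring.
apply: lerD => //.
have l0 := lam_gt0 n; have l2 := lam_ge2 n.
have h1 : 0 < lam a n + a by rewrite addr_gt0.
have h2 : 0 < 2 + a by rewrite addr_gt0.
rewrite lamS.
have -> : (2 + a) / (2 * a) * ((lam a n)^-1 - (lam a n + a)^-1) =
   (2 + a) / (2 * (lam a n * (lam a n + a))).
  by field; rewrite (gt_eqF h1) (gt_eqF l0) (gt_eqF a0).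
have -> : (lam a n)^-1 ^+ 2 = (2 + a) / (2 * (lam a n * (lam a n + a))) *
    ((2 * (lam a n + a)) / ((2 + a) * lam a n)).
  by field; rewrite ?(gt_eqF h1) ?(gt_eqF l0) ?(gt_eqF a0) ?(gt_eqF h2).
rewrite ger_pMr; last by apply: divr_gt0; [lra| rewrite !mulr_gt0 //; lra].
rewrite ler_pdivrMr; last by rewrite mulr_gt0 //; lra.
have := ler_wpM2l (ltW a0) l2; clear IH; nra.
Qed.

Lemma ln_lam_ge n : (1 <= n)%N -> ln n%:R + ln a <= ln (lam a n).
Proof.
move=> n1; have n0 : 0 < n%:R :> R by rewrite ltr0n.
rewrite -lnM ?posrE // ler_ln ?posrE ?mulr_gt0 ?lam_gt0 //.
exact: lam_ge.
Qed.

Lemma expo_bound (c s : R) : 0 <= s -> s * (expR (-1) / a - c) = 2 ->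
  exists K, forall n, (1 <= n)%N ->
   s * (c * ln n%:R) - expR (-1) * s * \sum_(i < n) (lam a i)^-1
   + expR (-1) * s ^+ 2 * \sum_(i < n) ((lam a i)^-1) ^+ 2 <= - (2 * ln n%:R) + K.
Proof.
move=> s0 hs.
set p := expR (-1 : R).
have p0 : 0 < p by exact: expR_gt0.
set C := (2 + a) / (2 * a) * (lam a 0)^-1.
exists (p * s / a * (ln (lam a 0) - ln a) + p * s ^+ 2 * C) => n n1.
have hY := Y_lb n; have hQ := Q_ub n; have hL := ln_lam_ge n1.
set Y := \sum_(i < n) (lam a i)^-1 in hY *.
set Q := \sum_(i < n) ((lam a i)^-1) ^+ 2 in hQ *.
set L := ln n%:R in hL *.
have hQ' : Q <= C.
  apply: le_trans hQ _; rewrite /C ler_wpM2l //.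
    by rewrite divr_ge0 // ?mulr_ge0 // ?addr_ge0 // ltW.
  by rewrite lerBlDr lerDl invr_ge0 ltW // lam_gt0.
have h1 : p * s * ((L + ln a - ln (lam a 0)) / a) <= p * s * Y.
  apply: ler_wpM2l; first by rewrite mulr_ge0 // ltW.
  apply: le_trans hY; rewrite ler_pM2r ?invr_gt0 //; lra.
have h2 : p * s ^+ 2 * Q <= p * s ^+ 2 * C.
  by apply: ler_wpM2l => //; rewrite mulr_ge0 ?exprn_ge0 // ltW.
have h3 : p * s * ((L + ln a - ln (lam a 0)) / a) =
   s * (p / a - c) * L + s * (c * L) + p * s / a * (ln a - ln (lam a 0)).
  by field; rewrite gt_eqF.
rewrite hs in h3.
clear hY hQ hQ'.
lra.
Qed.

Lemma p_gt : 1 / 4 < expR (-1 : R).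
Proof.
have -> : (-1 : R) = - (1/2) + - (1/2) by field.
rewrite expRD.
have h : 1 + - (1/2) < expR (- (1/2) : R).
  by apply: expR_gt1Dx; rewrite oppr_eq0.
have h0 : 0 < 1 + - (1/2) :> R by lra.
have := ltr_pM (ltW h0) (ltW h0) h h.
lra.
Qed.

End ana.

Section ser.
Context {R : realType}.

Definition tel (n : nat) : R := (n.+1%:R)^-1 - (n.+2%:R)^-1.

Lemma tel_eq n : tel n = ((n.+1%:R) * (n.+2%:R))^-1.
Proof.
rewrite /tel -[n.+2%:R]natr1.
have h : 0 < n.+1%:R :> R by rewrite ltr0n.
by field; rewrite gt_eqF ?(addr_gt0 h) // gt_eqF.
Qed.

Lemma tel_ge0 n : 0 <= tel n.
Proof. by rewrite tel_eq invr_ge0 mulr_ge0. Qed.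

Lemma sum_tel N : \sum_(k < N) tel k = 1 - (N.+1%:R)^-1.
Proof.
elim: N => [|N IH]; first by rewrite big_ord0 invr1 subrr.
by rewrite big_ord_recr /= IH /tel; ring.
Qed.

Lemma cvg_series_Mtel (M : R) : cvgn (series (fun n => M * tel n)).
Proof.
have -> : series (fun n => M * tel n) = (fun n => M * (1 - harmonic n)).
  apply/funext => n; rewrite seriesEord /= -mulr_sumr sum_tel.
  by case: n.
apply/cvg_ex; exists (M * (1 - 0)).
apply: cvgM; first exact: cvg_cst.
apply: cvgB; first exact: cvg_cst.
exact: cvg_harmonic.
Qed.

Lemma nneseries_Mtel (M : R) : 0 <= M ->
  (\sum_(n <oo) (M * tel n)%:E <= M%:E)%E.
Proof.
move=> M0; apply: lime_le.
  by apply: is_cvg_nneseries => n _ _; rewrite lee_fin mulr_ge0 // tel_ge0.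
apply: nearW => N; rewrite sumEFin lee_fin big_mkord -mulr_sumr sum_tel.
by rewrite ler_piMr // lerBlDr lerDl invr_ge0.
Qed.

Lemma inv_sq_le n : (1 <= n)%N -> ((n%:R)^+2)^-1 <= 6 * tel n :> R.
Proof.
move=> n1; rewrite tel_eq.
have n0 : 1 <= n%:R :> R by rewrite ler1n.
rewrite -[n.+1%:R]natr1 -[n.+2%:R]natr1 -[n.+1%:R]natr1.
set x := n%:R in n0 *.
rewrite -[X in X <= _]mulr1 ler_pdivrMl ?exprn_gt0; last lra.
rewrite mulrA ler_pdivlMr; last by rewrite mulr_gt0; lra.
  nra. by [].
Qed.

Lemma tel_lb n N : (n <= N)%N -> 1 <= ((N.+1%:R) * (N.+2%:R)) * tel n :> R.
Proof.
move=> nN; rewrite tel_eq ler_pdivlMr ?mul1r; last by rewrite mulr_gt0.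
by rewrite ler_pM // ?ler_nat ltnS.
Qed.

Lemma ln_large (M : R) : exists N, forall n, (N <= n)%N -> M <= ln n%:R.
Proof.
exists (Num.truncn (expR M)).+1 => n hn.
have h1 : expR M < n%:R.
  apply: lt_le_trans (truncnS_gt _) _; by rewrite ler_nat.
rewrite -[leLHS]expRK ler_ln; first exact: ltW.
  by rewrite posrE expR_gt0.
by rewrite posrE; exact: lt_trans (expR_gt0 _) h1.
Qed.

Lemma gauss_of_log (y : nat -> R) (k : R) (N : nat) : 0 < k ->
  (forall n, (N <= n)%N -> k * ln n%:R <= y n) -> gauss_summable y.
Proof.
move=> k0 hy al al0.
have [N2 hN2] := ln_large (2 / (al * k ^+ 2)).
set N3 := (maxn (maxn N N2) 1).
pose M : R := ((N3.+1%:R) * (N3.+2%:R)) + 6.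
apply: (@series_le_cvg _ _ (fun n => M * tel n)).
- by move=> n; rewrite expR_ge0.
- by move=> n; rewrite mulr_ge0 ?tel_ge0 // addr_ge0 // mulr_ge0.
- move=> n; case: (leqP N3 n) => hn.
  + have nN : (N <= n)%N by apply: leq_trans hn; rewrite /N3 !leq_max leqnn.
    have nN2 : (N2 <= n)%N by apply: leq_trans hn; rewrite /N3 !leq_max leqnn orbT.
    have n1 : (1 <= n)%N by apply: leq_trans hn; rewrite /N3 !leq_max leqnn orbT.
    have hl := hN2 _ nN2; have hyn := hy _ nN.
    have L0 : 0 <= ln n%:R :> R by rewrite ln_ge0 // ler1n.
    have npos : 0 < n%:R :> R by rewrite ltr0n.
    apply: (le_trans (y := ((n%:R)^+2)^-1)); last first.
      apply: le_trans (inv_sq_le n1) _; rewrite ler_pM2r; last first.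
        by rewrite tel_eq invr_gt0 mulr_gt0 // ltr0n.
      by rewrite /M lerDr mulr_ge0.
    have -> : ((n%:R)^+2)^-1 = expR (- (2 * ln n%:R)) :> R.
      by rewrite expRN -[2]/(2%:R) expRM_natl lnK.
    rewrite ler_expR mulNr lerN2.
    set L := ln n%:R in hl hyn L0 *.
    have kL0 : 0 <= k * L by rewrite mulr_ge0 // ltW.
    have hy2 : (k * L) * (k * L) <= y n * y n by apply: ler_pM.
    have ak0 : 0 < al * k ^+ 2 by rewrite mulr_gt0 // exprn_gt0.
    have akL : 2 <= al * k ^+ 2 * L.
      by move: hl; rewrite ler_pdivrMr // mulrC.
    have : 2 * L <= al * k ^+ 2 * L * L by apply: ler_wpM2r.
    have : al * ((k * L) * (k * L)) <= al * (y n * y n) by apply: ler_wpM2l => //; exact: ltW.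
    rewrite expr2; clear hy hN2; nra.
  + apply: (le_trans (y := 1)).
      by rewrite expR_le1 mulNr oppr_le0 mulr_ge0 ?sqr_ge0 // ltW.
    apply: le_trans (tel_lb (ltnW hn)) _.
    by rewrite ler_pM2r ?lerDl // tel_eq invr_gt0 mulr_gt0 // ltr0n.
exact: cvg_series_Mtel.
Qed.

Lemma esup_lt (u : (\bar R)^nat) (x : \bar R) :
  (limn_esup u < x)%E -> exists N, forall n, (N <= n)%N -> (u n < x)%E.
Proof.
rewrite /limn_esup /limf_esup => /ereal_inf_lt [_ [V hV <-]] hs.
case: hV => N _ hN; exists N => n nN.
apply: le_lt_trans hs; apply: ereal_sup_ubound; exists n => //.
exact: hN.
Qed.

Lemma det_main (a c : R) (U V : nat -> R) (N0 : nat) :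
  0 < a -> 1 / (4 * a) < c ->
  (forall n, (N0 <= n)%N -> c * ln n%:R <= partial_sum V n) ->
  limn_esup (fun n : nat =>
     ((ln (ln n%:R) / ln n%:R) * \sum_(i < n) `|V i - U i|)%:E) = 0%E ->
  exists N, (2 <= N)%N /\ forall n, (N <= n)%N ->
    [/\ ln n%:R / (4 * a) <= partial_sum U n,
        ln n%:R / (4 * a) <= partial_sum (seq_min U V) n &
        ln n%:R / (4 * a) <= partial_sum V n].
Proof.
move=> a0 ca hV h5.
set eps := c - 1 / (4 * a).
have eps0 : 0 < eps by rewrite subr_gt0.
have [N1 hN1] : exists N, forall n, (N <= n)%N ->
    (((ln (ln n%:R) / ln n%:R) * \sum_(i < n) `|V i - U i|)%:E < eps%:E)%E.
  by apply: esup_lt; rewrite h5 lte_fin.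
have [N2 hN2] := ln_large (expR 1).
exists (maxn (maxn N0 N1) (maxn N2 2)); split; first by rewrite !leq_max leqnn !orbT.
move=> n; rewrite !geq_max => /andP[/andP[nN0 nN1] /andP[nN2 n2]].
have e1 := hN1 _ nN1; rewrite lte_fin in e1.
have hsV := hV _ nN0.
have hL := hN2 _ nN2.
set L := ln n%:R in e1 hsV hL *.
set D := \sum_(i < n) `|V i - U i| in e1.
have L0 : 0 < L by apply: lt_le_trans hL; exact: expR_gt0.
have LL : 1 <= ln L.
  rewrite -[leLHS](expRK 1) ler_ln // ?posrE ?expR_gt0 //.
have D0 : 0 <= D by apply: sumr_ge0 => i _.
have hD : D <= eps * L.
  have : ln L / L * D * L <= eps * L by rewrite ler_pM2r // ltW.
  have -> : ln L / L * D * L = ln L * D by field; rewrite gt_eqF.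
  apply: le_trans; rewrite ler_peMl //.
have hU : partial_sum V n - D <= partial_sum U n.
  rewrite /partial_sum /D -sumrB; apply: ler_sum => i _.
  by rewrite lerBlDr -lerBlDl ler_norm.
have hm : partial_sum V n - D <= partial_sum (seq_min U V) n.
  rewrite /partial_sum /D -sumrB; apply: ler_sum => i _.
  rewrite /seq_min le_min; apply/andP; split.
    by rewrite lerBlDr -lerBlDl ler_norm.
  by rewrite lerBlDr lerDl.
have e2 : c * L - eps * L = L / (4 * a) by rewrite /eps; field; rewrite gt_eqF.
have e3 : L / (4 * a) <= c * L.
  have -> : L / (4 * a) = 1 / (4 * a) * L by rewrite mul1r mulrC.
  by apply: ler_wpM2r; apply: ltW.
clear e1 hV h5 hN1 hN2.
split; lra.
Qed.

End ser.

Definition fnat (n : nat) (f : {ffun 'I_n -> bool}) (i : nat) : bool :=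
  [exists k : 'I_n, (val k == i) && f k].
Definition Bset {R : realType} (a : R) (n : nat) (f : {ffun 'I_n -> bool}) (i : nat)
  : set R :=
  if fnat f i then `](lam a i)^-1, +oo[%classic else `]-oo, (lam a i)^-1]%classic.

Lemma fnatE (n : nat) (f : {ffun 'I_n -> bool}) (k : 'I_n) : fnat f k = f k.
Proof.
apply/existsP/idP => [[k' /andP[/eqP /val_inj -> //]]|fk].
by exists k; rewrite eqxx.
Qed.

Section main.
Context {R : realType} (a : R) (a0 : 0 < a) (d : measure_display)
  (T : measurableType d) (P : probability T R) (V : T -> nat -> R)
  (hV : has_law_pi P a V).


Definition Rect (n : nat) (f : {ffun 'I_n -> bool}) : set T :=
  \bigcap_(i in `I_n) [set w | Bset a f i (V w i)].

Lemma Bset_meas n f i : measurable (Bset a (n:=n) f i).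
Proof. by rewrite /Bset; case: ifPn. Qed.

Lemma Rect_meas n f : measurable (Rect (n:=n) f).
Proof.
apply: bigcap_measurableType => i _.
have := hV.1 i measurableT _ (Bset_meas f i).
by rewrite setTI.
Qed.

Lemma P_Rect n f : P (Rect (n:=n) f) =
  (\prod_(i < n) (if f i then expR (-1) else 1 - expR (-1)))%:E.
Proof.
rewrite /Rect hV.2; last by move=> i; exact: Bset_meas.
rewrite -prodEFin; apply: eq_bigr => i _.
rewrite /Bset fnatE; case: (f i).
  rewrite EP_gt ?lam_gt0 ?invr_gt0 ?lam_gt0 //.
  by rewrite mulNr mulfV // gt_eqF // lam_gt0.
rewrite EP_le ?lam_gt0 ?invr_gt0 ?lam_gt0 //.
by rewrite mulNr mulfV // gt_eqF // lam_gt0.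
Qed.

Definition badset (n : nat) (r : R) : set T :=
  [set w | exists f : {ffun 'I_n -> bool}, f \in index_enum _ /\
     (\sum_(i < n | f i) (lam a i)^-1 < r) /\ Rect f w].

Lemma badset_bound n r s : 0 <= s ->
  measurable (badset n r) /\
  (P (badset n r) <= (expR (s * r - expR (-1) * s * \sum_(i < n) (lam a i)^-1
     + expR (-1) * s ^+ 2 * \sum_(i < n) ((lam a i)^-1) ^+ 2))%:E)%E.
Proof.
move=> s0.
have [m h] := union_bound P (index_enum {ffun 'I_n -> bool})
  (fun f => \sum_(i < n | f i) (lam a i)^-1 < r) (@Rect_meas n).
split => //; apply: le_trans h _.
under eq_bigr do rewrite P_Rect.
rewrite sumEFin lee_fin.
apply: (@sum_bad _ n (fun i => (lam a i)^-1)) => //.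
- by rewrite expR_ge0 expR_le1 lerN10.
- by move=> i; rewrite invr_ge0 ltW // lam_gt0.
Qed.

Lemma badset_sub n r w : (forall i, 0 <= V w i) ->
  partial_sum (V w) n < r -> badset n r w.
Proof.
move=> V0 Vr.
exists [ffun k : 'I_n => (lam a k)^-1 < V w k]; split; first exact: mem_index_enum.
split.
  apply: le_lt_trans Vr; rewrite /partial_sum.
  apply: (le_trans (y := \sum_(i < n | [ffun k : 'I_n => (lam a k)^-1 < V w k] i) V w i)).
    by apply: ler_sum => i; rewrite ffunE => /ltW.
  rewrite [leRHS](bigID (fun i : 'I_n => [ffun k : 'I_n => (lam a k)^-1 < V w k] i)) /=.
  by rewrite lerDl sumr_ge0.
move=> i /= iI; rewrite /Bset.
have -> : fnat [ffun k : 'I_n => (lam a k)^-1 < V w k] i = ((lam a i)^-1 < V w i).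
  by rewrite (fnatE _ (Ordinal iI)) ffunE.
case: ifPn => h /=; rewrite in_itv /= ?andbT //.
by rewrite leNgt.
Qed.

Lemma V_nonneg i : {ae P, forall w, 0 <= V w i}.
Proof.
pose B : nat -> set R := fun j => if j == i then `]-oo, 0[%classic else setT.
have mB : forall j, measurable (B j) by move=> j; rewrite /B; case: ifPn.
exists (\bigcap_(j in `I_i.+1) [set w | B j (V w j)]); split.
- apply: bigcap_measurableType => j _.
  by have := hV.1 j measurableT _ (mB j); rewrite setTI.
- rewrite hV.2 // big_ord_recr /= /B eqxx EP_neg.
  by rewrite mule0.
- move=> w /= hw j /= ji; rewrite /B; case: ifPn => [/eqP -> | _ //].
  by rewrite /= in_itv /= ltNge; apply/negP.
Qed.

Lemma BC_bad (c s K : R) : 0 <= s ->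
  (forall n, (1 <= n)%N ->
   s * (c * ln n%:R) - expR (-1) * s * \sum_(i < n) (lam a i)^-1
   + expR (-1) * s ^+ 2 * \sum_(i < n) ((lam a i)^-1) ^+ 2 <= - (2 * ln n%:R) + K) ->
  {ae P, forall w, exists N, forall n, (N <= n)%N -> ~ badset n (c * ln n%:R) w}.
Proof.
move=> s0 hK.
pose F := fun n => badset n (c * ln n%:R).
have mF n : measurable (F n) := (badset_bound n (c * ln n%:R) s0).1.
pose M := 6 * expR K + 2.
have M0 : 0 <= M by rewrite addr_ge0 // mulr_ge0 // expR_ge0.
have hsum : (\sum_(n <oo) P (F n) < +oo)%E.
  apply: le_lt_trans (ltry M); apply: le_trans (nneseries_Mtel M0).
  apply: lee_nneseries => [n _ _|n _]; first exact: measure_ge0.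
  case: n => [|n].
    apply: le_trans (probability_le1 _ (mF 0%N)) _.
    have e0 := expR_ge0 K; rewrite lee_fin tel_eq /M mul1r; lra.
  apply: le_trans (badset_bound n.+1 (c * ln n.+1%:R) s0).2 _.
  rewrite lee_fin.
  apply: le_trans (_ : expR (- (2 * ln n.+1%:R) + K) <= _).
    by rewrite ler_expR; apply: hK.
  have npos : 0 < n.+1%:R :> R by rewrite ltr0n.
  rewrite expRD.
  have -> : expR (- (2 * ln n.+1%:R)) = ((n.+1%:R)^+2)^-1 :> R.
    by rewrite expRN -[2]/(2%:R) expRM_natl lnK.
  have h6 := inv_sq_le (R := R) (n := n.+1) isT.
  have t0 := tel_ge0 (R := R) n.+1.
  have e0 := expR_gt0 K.
  rewrite /M; set E := expR K in e0 *; set t := tel n.+1 in h6 t0 *.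
  set x := ((n.+1%:R)^+2)^-1 in h6 *.
  have : x * E <= 6 * t * E by rewrite ler_pM2r.
  nra.
have h0 := lim_sup_set_cvg0 mF hsum.
exists (lim_sup_set F); split => //.
  apply: bigcap_measurableType => k _.
  by apply: bigcup_measurable => j _.
move=> w /= hw N _; apply: contrapT => hn; apply: hw.
by exists N => n nN Fn; apply: hn; exists n.
Qed.

End main.

Theorem mainTheorem10 (R : realType) (a : R) (d : measure_display)
  (T : measurableType d) (P : probability T R) (U V : T -> nat -> R) :
  0 < a ->
  (* U is a random element of R_+^infty (its law is mu) *)
  (forall i, measurable_fun setT (fun w => U w i)) ->
  (forall w i, 0 <= U w i) ->
  (* V has law pi_a *)
  has_law_pi P a V ->
  (* limsup_d (log log d / log d) sum_{i=1}^d |V_i - U_i| = 0  a.s. *)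
  {ae P, forall w, limn_esup (fun n : nat =>
      ((ln (ln n%:R) / ln n%:R) * \sum_(i < n) `|V w i - U w i|)%:E)
      = 0%E} ->
  (* limsup_d U_d / (d V_d) < oo  a.s.  (U_d = U (d-1)) *)
  {ae P, forall w, (limn_esup (fun n : nat =>
      (U w n / (n.+1%:R * V w n))%:E) < +oo)%E} ->
  {ae P, forall w, exists i0 : nat, (2 <= i0)%N /\
      forall i : nat, (i0 <= i)%N ->
        ln i%:R / (4 * a) <= partial_sum (U w) i} /\
  {ae P, forall w, gauss_summable (partial_sum (U w))} /\
  {ae P, forall w, gauss_summable (partial_sum (seq_min (U w) (V w)))} /\
  {ae P, forall w, gauss_summable (partial_sum (V w))} /\
  law_in_S P U.
Proof.
move=> a0 mU U0 hV h5 _.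
have hp := p_gt (R := R).
set p := expR (-1 : R) in hp.
pose c := (p + 1 / 4) / (2 * a).
pose s := 4 * a / (p - 1 / 4).
have p4 : 0 < p - 1 / 4 by rewrite subr_gt0.
have s0 : 0 <= s by rewrite /s divr_ge0 // ?mulr_ge0 // ltW.
have hs : s * (p / a - c) = 2.
  by rewrite /s /c; field; rewrite !gt_eqF //; lra.
have ca : 1 / (4 * a) < c.
  rewrite /c ltr_pdivlMr ?mulr_gt0 //.
  have -> : 1 / (4 * a) * (2 * a) = 1 / 2 by field; rewrite gt_eqF.
  lra.
have [K hK] := expo_bound a0 s0 hs.
have hV0 : {ae P, forall w, forall i, 0 <= V w i}.
  by apply: ae_foralln => i; exact: (V_nonneg hV i).
have hBC := BC_bad a0 hV s0 hK.
have hall : {ae P, forall w, exists N, (2 <= N)%N /\ forall n, (N <= n)%N ->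
    [/\ ln n%:R / (4 * a) <= partial_sum (U w) n,
        ln n%:R / (4 * a) <= partial_sum (seq_min (U w) (V w)) n &
        ln n%:R / (4 * a) <= partial_sum (V w) n]}.
  apply: filterS3 hV0 hBC h5 => w hw0 [N hN] hw5.
  apply: (det_main (N0 := N) a0 ca) => // n nN.
  rewrite leNgt; apply/negP => hlt.
  apply: (hN n nN); exact: badset_sub hw0 hlt.
have k0 : 0 < 1 / (4 * a) by rewrite divr_gt0 // mulr_gt0.
have hU : {ae P, forall w, gauss_summable (partial_sum (U w))}.
  apply: filterS hall => w [N [_ hN]].
  apply: (gauss_of_log (N := N) k0) => n nN.
  by rewrite mul1r mulrC; have [] := hN n nN.
split.
  apply: filterS hall => w [N [N2 hN]]; exists N; split => // i iN.
  by have [] := hN i iN.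
split => //.
split.
  apply: filterS hall => w [N [_ hN]].
  apply: (gauss_of_log (N := N) k0) => n nN.
  by rewrite mul1r mulrC; have [] := hN n nN.
split.
  apply: filterS hall => w [N [_ hN]].
  apply: (gauss_of_log (N := N) k0) => n nN.
  by rewrite mul1r mulrC; have [] := hN n nN.
by split.
Qed.
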